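(* Let $\psi$ be an injective map from the positive integers to the positive integers and let $A=\{\psi(n): n\ge 1\}$. For every nonnegative integer $n$, \[ \bar{p}^{A}_{1}(n)=\sum_{(N_0,N_1,N_2,\dots)}\ \prod_{j\ge0}\bar{p}^{A}(N_j), \] where the sum runs over all sequences $(N_0,N_1,\dots)$ of nonnegative integers with $n=\sum_{i\ge0}2^{i}N_i$.
   Context: For a set $A$ of positive integers: $\bar{p}^{A}(n)=E^{A}(n)-O^{A}(n)$, where $E^{A}(n)$ (resp. $O^{A}(n)$) is the number of partitions of $n$ into parts from $A$ (no restriction on multiplicities) with an even (resp. odd) number of parts, and $\bar{p}^{A}(0)=1$. For a positive integer $\alpha$, $\bar{p}^{A}_{\alpha}(n)=E^{A}_{\alpha}(n)-O^{A}_{\alpha}(n)$, where $E^{A}_{\alpha}(n)$ (resp. $O^{A}_{\alpha}(n)$) is the number of partitions of $n$ into parts from $A$ in which each part occurs at most $\alpha$ times and having an even (resp. odd) number of parts, and $\bar{p}^{A}_{\alpha}(0)=1$. *)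

(* Defs.v *)
From mathcomp Require Import all_boot all_order all_algebra.
Set Implicit Arguments. Unset Strict Implicit. Unset Printing Implicit Defensive.
Import GRing.Theory Num.Theory.

(* A partition of n is encoded by its multiplicity function
   m : 'I_n.+1 -> 'I_n.+1, where m k is the number of times the part k occurs
   (parts are between 1 and n, each occurring at most n times). *)

Definition is_partA (A : pred nat) (n : nat) (m : {ffun 'I_n.+1 -> 'I_n.+1}) : bool :=
  ((\sum_(k < n.+1) k * m k)%N == n) &&
  [forall k : 'I_n.+1, (m k != 0 :> nat) ==> ((0 < k)%N && A k)].

Definition num_parts (n : nat) (m : {ffun 'I_n.+1 -> 'I_n.+1}) : nat :=
  (\sum_(k < n.+1) m k)%N.

Definition EA (A : pred nat) (n : nat) : nat :=
  #|[set m : {ffun 'I_n.+1 -> 'I_n.+1} | is_partA A m && ~~ odd (num_parts m)]|.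
Definition OA (A : pred nat) (n : nat) : nat :=
  #|[set m : {ffun 'I_n.+1 -> 'I_n.+1} | is_partA A m && odd (num_parts m)]|.

Definition pbar (A : pred nat) (n : nat) : int := (EA A n)%:Z - (OA A n)%:Z.

Definition EA_alpha (A : pred nat) (alpha n : nat) : nat :=
  #|[set m : {ffun 'I_n.+1 -> 'I_n.+1} |
      [&& is_partA A m, [forall k, (m k <= alpha)%N] & ~~ odd (num_parts m)]]|.
Definition OA_alpha (A : pred nat) (alpha n : nat) : nat :=
  #|[set m : {ffun 'I_n.+1 -> 'I_n.+1} |
      [&& is_partA A m, [forall k, (m k <= alpha)%N] & odd (num_parts m)]]|.

Definition pbar_alpha (A : pred nat) (alpha n : nat) : int :=
  (EA_alpha A alpha n)%:Z - (OA_alpha A alpha n)%:Z.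

(* Main.v *)
Require Import Defs.
From mathcomp Require Import all_boot all_order all_algebra.
Import GRing.Theory Num.Theory.
Local Open Scope ring_scope.

Lemma sum1_int (T : finType) (C : pred T) :
  \sum_(i | C i) (1 : int) = #|[set i | C i]|%:Z.
Proof. by rewrite -sum1dep_card -natz natr_sum; apply: eq_bigr. Qed.

Lemma sign_sum (T : finType) (P : pred T) (g : T -> nat) :
  (#|[set x | P x && ~~ odd (g x)]|%:Z - #|[set x | P x && odd (g x)]|%:Z)
  = \sum_(x | P x) (-1) ^+ (g x) :> int.
Proof.
rewrite (bigID (fun x => odd (g x))) /=.
rewrite (eq_bigr (fun _ => -1)); last first.
  by move=> i /andP[_ Ho]; rewrite -signr_odd Ho expr1.
rewrite [X in _ = _ + X](eq_bigr (fun _ => 1)); last first.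
  by move=> i /andP[_ Ho]; rewrite -signr_odd (negbTE Ho) expr0.
by rewrite sumrN !sum1_int addrC.
Qed.
Lemma coef_prod_ffun (I J : finType) (c : I -> J -> int) (w : I -> J -> nat) N :
  (\prod_(i : I) \sum_(j : J) c i j *: 'X^(w i j))`_N =
  \sum_(f : {ffun I -> J} | (\sum_i w i (f i))%N == N) \prod_i c i (f i).
Proof.
rewrite bigA_distr_bigA /= coef_sum [RHS]big_mkcond /=; apply: eq_bigr => f _.
have -> : \prod_i (c i (f i) *: 'X^(w i (f i)) : {poly int})
   = (\prod_i c i (f i)) *: 'X^(\sum_i w i (f i)).
  rewrite -prodrXr -mul_polyC rmorph_prod -big_split /=.
  by apply: eq_bigr => i _; rewrite mul_polyC.
by rewrite coefZ coefXn eq_sym; case: eqP => _; rewrite ?mulr1 ?mulr0.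
Qed.

Definition eqm (n : nat) (p q : {poly int}) := forall i, (i <= n)%N -> p`_i = q`_i.

Lemma eqm_refl n p : eqm n p p. Proof. by []. Qed.
Lemma eqm_sym n p q : eqm n p q -> eqm n q p. Proof. by move=> h i hi; rewrite h. Qed.
Lemma eqm_trans n p q r : eqm n p q -> eqm n q r -> eqm n p r.
Proof. by move=> h1 h2 i hi; rewrite h1 ?h2. Qed.
Lemma eqm_mul n p p' q q' : eqm n p p' -> eqm n q q' -> eqm n (p * q) (p' * q').
Proof.
move=> h1 h2 i hi; rewrite !coefM; apply: eq_bigr => j _.
have hj : (j <= n)%N by apply: leq_trans hi; rewrite -ltnS.
rewrite h1 // h2 //; apply: leq_trans hi; exact: leq_subr.
Qed.
Lemma eqm_prod n (I : Type) (r : seq I) (P : pred I) (f g : I -> {poly int}) :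
  (forall i, P i -> eqm n (f i) (g i)) -> eqm n (\prod_(i <- r | P i) f i) (\prod_(i <- r | P i) g i).
Proof.
move=> h; apply: (big_ind2 (eqm n)) => //; exact: eqm_mul.
Qed.
Lemma eqm_XnM n m p : (n < m)%N -> eqm n ('X^m * p) 0.
Proof. by move=> hm i hi; rewrite coefXnM coef0 (leq_ltn_trans hi hm). Qed.
Lemma eqm_Xn n m : (n < m)%N -> eqm n 'X^m 0.
Proof. by move=> hm; rewrite -[X in eqm _ X]mulr1; apply: eqm_XnM. Qed.

Definition cf (A : pred nat) (Q : pred nat) (k j : nat) : int :=
  (((j != 0%N) ==> ((0 < k)%N && A k)) && Q j)%:R * (-1) ^+ j.

Definition SS (A Q : pred nat) (M k : nat) : {poly int} :=
  \sum_(j < M.+1) cf A Q k j *: 'X^(k * j).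

Definition PP (A Q : pred nat) (N : nat) : {poly int} :=
  \prod_(k < N.+1) SS A Q N k.

Lemma prod_bool (I : finType) (b : I -> bool) :
  \prod_i (b i)%:R = [forall i, b i]%:R :> int.
Proof.
case: forallP => [h|/forallP]; first by rewrite big1 // => i _; rewrite h.
rewrite negb_forall => /existsP[i /negbTE hi].
by rewrite (bigD1 i) //= hi mul0r.
Qed.

Lemma forall_andb (I : finType) (b c : I -> bool) :
  [forall i, b i && c i] = [forall i, b i] && [forall i, c i].
Proof.
apply/forallP/andP => [h|[/forallP h1 /forallP h2] i].
  by split; apply/forallP => i; case/andP: (h i).
by rewrite h1 h2.
Qed.

Lemma sign_coef (A Q : pred nat) (N : nat) :
  \sum_(m : {ffun 'I_N.+1 -> 'I_N.+1} | is_partA A m && [forall k : 'I_N.+1, Q (m k : nat)])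
     (-1) ^+ (num_parts m) = (PP A Q N)`_N.
Proof.
rewrite /PP /SS (coef_prod_ffun _ _ (fun k j : 'I_N.+1 => cf A Q k j)
                   (fun k j : 'I_N.+1 => (k * j)%N)).
rewrite big_mkcond [RHS]big_mkcond; apply: eq_bigr => m _ /=.
rewrite /cf big_split /= prod_bool prodrXr forall_andb /is_partA /num_parts.
case: eqP => _ //=.
by case: ([forall k, _] && _); rewrite ?mul1r ?mul0r.
Qed.

Lemma eqm_sum_trunc N M M' (c : nat -> int) (w : nat -> nat) :
  (M' <= M)%N ->
  (forall j, (M' < j)%N -> (j <= M)%N -> (w j <= N)%N -> c j = 0) ->
  eqm N (\sum_(j < M.+1) c j *: 'X^(w j)) (\sum_(j < M'.+1) c j *: 'X^(w j)).
Proof.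
move=> hM hc i hi.
rewrite (big_ord_widen _ (fun j => c j *: 'X^(w j)) (_ : M'.+1 <= M.+1)%N) //.
rewrite [in LHS](bigID (fun j : 'I_M.+1 => (j < M'.+1)%N)) /= coefD.
rewrite [X in _ + X = _]coef_sum [X in _ + X = _]big1 ?addr0 // => j hj.
rewrite coefZ coefXn; case: eqP => [he|]; last by rewrite mulr0.
rewrite hc ?mul0r //; first by rewrite ltnNge -ltnS.
  by rewrite -ltnS.
by rewrite -he.
Qed.

Lemma SS_trunc (A Q : pred nat) N n : (N <= n)%N ->
  forall k, eqm N (SS A Q n k) (SS A Q N k).
Proof.
move=> hN k; apply: eqm_sum_trunc => // j hj _ hk.
rewrite /cf; case: k hk => [|k] hk.
  by rewrite -lt0n (leq_ltn_trans _ hj) //= mul0r.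
by move: (leq_trans (leq_pmull j (ltn0Sn k)) hk); rewrite leqNgt hj.
Qed.

Lemma SS_big (A Q : pred nat) N n k : Q 0%N -> (N < k)%N -> eqm N (SS A Q n k) 1.
Proof.
move=> hQ hk; apply: eqm_trans (@eqm_sum_trunc N n 0 (cf A Q k) (fun j => k * j)%N _ _) _ => //.
  move=> j hj _ hkj.
  have : (k <= k * j)%N by rewrite leq_pmulr.
  by move=> /(leq_trans hk) /(leq_ltn_trans hkj); rewrite ltnn.
by rewrite big_ord1 /cf /= hQ muln0 expr0 mulr1 scale1r.
Qed.

Lemma PP_trunc (A Q : pred nat) N n : Q 0%N -> (N <= n)%N ->
  eqm N (PP A Q n) (PP A Q N).
Proof.
move=> hQ hN; rewrite /PP.
rewrite (bigID (fun k : 'I_n.+1 => (k < N.+1)%N)) /=.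
rewrite (big_ord_widen _ (fun k => SS A Q N k) (_ : N.+1 <= n.+1)%N) //.
rewrite -[X in eqm _ _ X]mulr1.
apply: eqm_mul.
  by apply: eqm_prod => k _; apply: SS_trunc.
apply: (@eqm_trans _ _ (\prod_(k < n.+1 | ~~ (k < N.+1)%N) 1)); last by rewrite big1.
apply: eqm_prod => k hk; apply: SS_big => //; by rewrite ltnNge -ltnS.
Qed.

Lemma pbar_coef (A : pred nat) N n : (N <= n)%N ->
  pbar A N = (PP A predT n)`_N.
Proof.
move=> hN; rewrite (@PP_trunc A predT N n isT hN N (leqnn N)) -sign_coef.
rewrite /pbar /EA /OA sign_sum; apply: eq_bigl => m.
by case: (is_partA A m) => //=; apply/esym/forallP.
Qed.

Lemma pbar_alpha_coef (A : pred nat) n :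
  pbar_alpha A 1 n = (PP A (fun j => j <= 1)%N n)`_n.
Proof.
rewrite -sign_coef /pbar_alpha /EA_alpha /OA_alpha -sign_sum.
by congr (_%:Z - _%:Z); apply: eq_card => m; rewrite !inE andbA.
Qed.

Lemma comp_trunc n (p : {poly int}) e : (0 < e)%N ->
  eqm n (\sum_(i < n.+1) p`_i *: 'X^(e * i)) (p \Po 'X^e).
Proof.
move=> he t ht; rewrite coef_comp_poly_Xn // coef_sumMXn.
case: dvdnP => [[q hqe]|nd].
  have hq : (q < n.+1)%N.
    by rewrite ltnS; apply: leq_trans ht; rewrite hqe leq_pmulr.
  rewrite hqe.
  rewrite (big_pred1 (Ordinal hq)) ?mulnK // => i /=.
  by rewrite /= mulnC eqn_pmul2r.
rewrite big_pred0 // => i /=; apply/negP => /eqP hi; apply: nd.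
by exists i; rewrite -hi mulnC.
Qed.

Lemma SS_false (A Q : pred nat) n k : Q 0%N -> ~~ ((0 < k)%N && A k) -> SS A Q n k = 1.
Proof.
move=> hQ h; rewrite /SS big_ord_recl /cf /= hQ muln0 expr0 mulr1 scale1r.
by rewrite big1 ?addr0 // => j _; rewrite (negbTE h) /= mul0r scale0r.
Qed.

Lemma SSg_true (A : pred nat) n k : (0 < k)%N && A k ->
  SS A predT n k = \sum_(j < n.+1) (-1) ^+ j *: 'X^(k * j).
Proof. by move=> h; apply: eq_bigr => j _; rewrite /cf h implybT mul1r. Qed.

Lemma SSa_true (A : pred nat) n k : (0 < k)%N && A k -> (0 < n)%N ->
  SS A (fun j => j <= 1)%N n k = 1 - 'X^k.
Proof.
move=> h; case: n => [|n] // _.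
rewrite /SS big_ord_recl big_ord_recl big1; last first.
  by move=> j _; rewrite /cf /= andbF mul0r scale0r.
by rewrite /cf /= h /= muln0 muln1 expr0 expr1 mulr1 mul1r scale1r scaleN1r addr0.
Qed.

Lemma sign_scale j (p : {poly int}) : ((-1) ^+ j : int) *: p = (-1) ^+ j * p.
Proof. by rewrite -mul_polyC rmorphXn rmorphN rmorph1. Qed.

Lemma geom_comp k e n :
  (\sum_(j < n.+1) (-1) ^+ j *: 'X^(k * j)) \Po 'X^e
  = \sum_(j < n.+1) (- 'X^(k * e)) ^+ j :> {poly int}.
Proof.
rewrite rmorph_sum; apply: eq_bigr => j _ /=.
rewrite comp_polyZ comp_Xn_poly (exprNn 'X^(k * e)) sign_scale -!exprM.
by rewrite mulnA (mulnC e).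
Qed.

Lemma geom_id (y : {poly int}) n :
  (1 + y) * \sum_(j < n.+1) (- y) ^+ j = 1 - (- y) ^+ n.+1.
Proof.
have h := subrX1 (- y) n.+1.
have -> : 1 + y = - (- y - 1) by rewrite opprB opprK addrC.
by rewrite mulNr -h opprB.
Qed.

Lemma eqm_hi n M (c : {poly int}) : (n < M)%N -> eqm n (1 - c * 'X^M) 1.
Proof. by move=> hM i hi; rewrite coefB coefMXn (leq_ltn_trans hi hM) subr0. Qed.

Lemma tele k m : (1 - 'X^k) * \prod_(j < m) (1 + 'X^(k * 2 ^ j)) = 1 - 'X^(k * 2 ^ m) :> {poly int}.
Proof.
elim: m => [|m IH]; first by rewrite big_ord0 mulr1 expn0 muln1.
by rewrite big_ord_recr /= mulrA IH -subr_sqr expr1n -exprM expnSr mulnA.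
Qed.

Lemma perk (A : pred nat) n (k : 'I_n.+1) :
  eqm n (\prod_(j < n.+1) (SS A predT n k \Po 'X^(2 ^ j)))
        (SS A (fun j => j <= 1)%N n k).
Proof.
case h: ((0 < k)%N && A k); last first.
  rewrite !SS_false ?h //.
  by rewrite big1 // => j _; rewrite rmorph1.
have hk : (0 < k)%N by case/andP: h.
have hn : (0 < n)%N by apply: leq_trans hk _; rewrite -ltnS.
rewrite SSg_true // SSa_true //.
under eq_bigr do rewrite geom_comp.
apply: (@eqm_trans _ _ ((1 - 'X^k) * \prod_(j < n.+1)
   ((1 + 'X^(k * 2 ^ j)) * \sum_(i < n.+1) (- 'X^(k * 2 ^ j)) ^+ i))).
  rewrite big_split mulrA tele -[X in eqm _ X _]mul1r; apply: eqm_mul => //.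
  apply: eqm_sym; rewrite -[X in 1 - X]mul1r; apply: eqm_hi.
  apply: leq_trans (leq_pmull _ hk); apply: ltnW; exact: ltn_expl.
rewrite -[X in eqm _ _ X]mulr1; apply: eqm_mul => //.
apply: (@eqm_trans _ _ (\prod_(j < n.+1) 1)); last by rewrite big1.
apply: eqm_prod => j _; rewrite geom_id exprNn -exprM.
apply: eqm_hi; rewrite -mulnA.
apply: leq_trans (leq_pmull _ hk).
by apply: leq_trans (leq_pmull _ _); rewrite ?expn_gt0.
Qed.

Lemma key (A : pred nat) n :
  eqm n (\prod_(j < n.+1) \sum_(i < n.+1) (PP A predT n)`_i *: 'X^(2 ^ j * i))
        (PP A (fun j => j <= 1)%N n).
Proof.
apply: (@eqm_trans _ _ (\prod_(j < n.+1) (PP A predT n \Po 'X^(2 ^ j)))).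
  by apply: eqm_prod => j _; apply: comp_trunc; rewrite expn_gt0.
rewrite {2}/PP.
under eq_bigr do rewrite /PP rmorph_prod.
rewrite exchange_big /=; apply: eqm_prod => k _; exact: perk.
Qed.

Theorem mainTheorem4 (psi : nat -> nat) (A : pred nat)
  (hpos : forall k, (0 < k)%N -> (0 < psi k)%N)
  (hinj : forall k l, (0 < k)%N -> (0 < l)%N -> psi k = psi l -> k = l)
  (hA : forall a, A a <-> exists2 k, (0 < k)%N & psi k = a)
  (n : nat) :
  pbar_alpha A 1 n =
  \sum_(N : {ffun 'I_n.+1 -> 'I_n.+1} | (\sum_(i < n.+1) 2 ^ i * N i)%N == n)
     \prod_(j < n.+1) pbar A (N j).
Proof.
rewrite pbar_alpha_coef -(key A n n (leqnn n)).
rewrite (coef_prod_ffun _ _ (fun (j i : 'I_n.+1) => (PP A predT n)`_i)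
           (fun (j i : 'I_n.+1) => (2 ^ j * i)%N)).
apply: eq_bigr => N _; apply: eq_bigr => j _.
by rewrite (@pbar_coef A (N j) n) // -ltnS.
Qed.
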